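(* Consider a $\mathrm{Knapsack}$ instance $(C,V)$ with LP relaxation $K$ and optimal integral value $\mathrm{OPT}$, and let $t\ge 2$ be an integer. Then $$\max\Big\{\sum_{i\in V}v_i\,y_{\{i\}}: y\in\mathrm{La}^t(K)\Big\}\le\Big(1+\frac{1}{t-1}\Big)\mathrm{OPT}.$$ In particular, the integrality gap of the $t$-th level of the Lasserre hierarchy for $\mathrm{Knapsack}$ is at most $t/(t-1)$.
   Context: A $\mathrm{Knapsack}$ instance consists of objects $V=[n]$ with sizes $c_i\ge 0$, values $v_i\ge 0$ and a capacity $C$ with $c_i\le C$ for all $i$; $\mathrm{OPT}$ is the maximum of $\sum_{i\in X}v_i$ over $X\subseteq V$ with $\sum_{i\in X}c_i\le C$. Its LP relaxation is $K=\{x\in[0,1]^n: g(x)\ge 0\}$ with the single constraint $g(x)=C-\sum_{i\in V}c_ix_i$. Notation: $\mathcal P_t(U)$ is the set of subsets of $U$ of size at most $t$. For a collection $\mathcal T$ of subsets and a vector $y$ indexed by subsets, $M_{\mathcal T}(y)$ is the symmetric matrix indexed by $\mathcal T$ with $(I,J)$-entry $y_{I\cup J}$. For an affine $g(x)=b+\sum_{j}a_jx_j$, $(g*y)_I=b\,y_I+\sum_j a_j y_{I\cup\{j\}}$. The $t$-th Lasserre lifted polytope $\mathrm{La}^t(K)$ is the set of $y\in[0,1]^{\mathcal P_{2t}(V)}$ with $y_\emptyset=1$, $M_{\mathcal P_t(V)}(y)\succeq0$, and $M_{\mathcal P_{t-1}(V)}(g*y)\succeq0$. *)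

(* Defs.v *)
From HB Require Import structures.
From mathcomp Require Import all_boot all_order all_algebra.
Set Implicit Arguments. Unset Strict Implicit. Unset Printing Implicit Defensive.
Import Order.TTheory GRing.Theory Num.Theory.
Local Open Scope ring_scope.

(* A vector y indexed by subsets is a function {set 'I_n} -> R; only its
   values on subsets of size <= 2t are constrained (the rest are irrelevant). *)

Definition Pt (n t : nat) : pred {set 'I_n} := fun I => (#|I| <= t)%N.
Arguments Pt : clear implicits.

Definition psd_on {R : realFieldType} {T : finType} (P : pred T)
  (M : T -> T -> R) : Prop :=
  forall x : T -> R, 0 <= \sum_(I | P I) \sum_(J | P J) x I * M I J * x J.

Definition moment_mx {R : realFieldType} {n : nat} (y : {set 'I_n} -> R)
  : {set 'I_n} -> {set 'I_n} -> R := fun I J => y (I :|: J).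

(* g(x) = C - sum_i c_i x_i ;  (g*y)_I = C y_I - sum_j c_j y_{I u {j}} *)
Definition knap_gy {R : realFieldType} {n : nat} (c : 'I_n -> R) (C : R)
  (y : {set 'I_n} -> R) : {set 'I_n} -> R :=
  fun I => C * y I - \sum_(j < n) c j * y (I :|: [set j]).

Definition Lasserre {R : realFieldType} {n : nat} (c : 'I_n -> R) (C : R)
  (t : nat) (y : {set 'I_n} -> R) : Prop :=
  [/\ y set0 = 1,
      (forall I : {set 'I_n}, (#|I| <= 2 * t)%N -> 0 <= y I <= 1),
      psd_on (Pt n t) (moment_mx y) &
      psd_on (Pt n (t - 1)) (moment_mx (knap_gy c C y))].

(* OPT = max { sum_{i in X} v_i : X subset V, sum_{i in X} c_i <= C }
   (values are nonnegative; 0 is used as the neutral element of max). *)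
Definition knapOPT {R : realFieldType} {n : nat} (c v : 'I_n -> R) (C : R) : R :=
  \big[Num.max/0]_(X : {set 'I_n} | \sum_(i in X) c i <= C) \sum_(i in X) v i.

(* Main.v *)
Require Import Defs.
From HB Require Import structures.
From mathcomp Require Import all_boot all_order all_algebra.
From Stdlib Require Import FunctionalExtensionality.
Set Implicit Arguments. Unset Strict Implicit. Unset Printing Implicit Defensive.
Import Order.TTheory GRing.Theory Num.Theory.
Local Open Scope ring_scope.

Lemma arith4 (R : zmodType) (a b c d : R) : a - c = (b - d) + ((a - b) - (c - d)).
Proof.
have e : a - b + (b - d) = a - d by rewrite addrA subrK.
by rewrite addrA [b - d + _]addrC e opprB addrA subrK.
Qed.

Lemma arith5 (R : zmodType) (a b c d : R) : (a - b) - (c - d) = (a - c) - (b - d).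
Proof. by rewrite !opprB addrACA [RHS]addrACA (addrC (- b)). Qed.

Section QF.
Variable R : realFieldType.
Variable n : nat.
Local Notation ST := {set 'I_n}.

Definition Bf (w x x' : ST -> R) : R :=
  \sum_(A : ST) \sum_(B : ST) x A * x' B * w (A :|: B).
Definition Qf (w x : ST -> R) : R := Bf w x x.

Definition Eop (l : 'I_n) (w : ST -> R) : ST -> R := fun I => w (I :|: [set l]).
Definition Dop (l : 'I_n) (w : ST -> R) : ST -> R := fun I => w I - w (I :|: [set l]).
Definition push (l : 'I_n) (x : ST -> R) : ST -> R :=
  fun A => \sum_(B : ST | B :|: [set l] == A) x B.

Lemma sum_push l x (F : ST -> R) :
  \sum_(A : ST) push l x A * F A = \sum_(B : ST) x B * F (B :|: [set l]).
Proof.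
rewrite /push. under eq_bigr do rewrite big_distrl /=.
rewrite (exchange_big_dep xpredT) //=.
apply: eq_bigr => B _.
by rewrite (big_pred1 (B :|: [set l])) // => A /=; rewrite eq_sym.
Qed.

Lemma Bf_pushl l w x x' : Bf w (push l x) x' = Bf (Eop l w) x x'.
Proof.
rewrite /Bf.
under eq_bigr do under eq_bigr do rewrite -mulrA.
under eq_bigr do rewrite -big_distrr /=.
rewrite (sum_push l x (fun A => \sum_(B : ST) x' B * w (A :|: B))).
apply: eq_bigr => A _; rewrite big_distrr /=.
apply: eq_bigr => B _; rewrite mulrA /Eop; congr (_ * w _).
by rewrite setUAC.
Qed.

Lemma Bf_pushr l w x x' : Bf w x (push l x') = Bf (Eop l w) x x'.
Proof.
rewrite /Bf; apply: eq_bigr => A _.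
under eq_bigr do rewrite [x A * _]mulrC -mulrA.
rewrite (sum_push l x' (fun B => x A * w (A :|: B))); apply: eq_bigr => B _.
by rewrite mulrCA mulrA /Eop setUA.
Qed.

Lemma Bf_subl w x1 x2 x' :
  Bf w (fun A => x1 A - x2 A) x' = Bf w x1 x' - Bf w x2 x'.
Proof.
rewrite /Bf -sumrB; apply: eq_bigr => A _; rewrite -sumrB.
by apply: eq_bigr => B _; rewrite !mulrBl.
Qed.

Lemma Bf_subr w x x1 x2 :
  Bf w x (fun A => x1 A - x2 A) = Bf w x x1 - Bf w x x2.
Proof.
rewrite /Bf -sumrB; apply: eq_bigr => A _; rewrite -sumrB.
by apply: eq_bigr => B _; rewrite mulrBr mulrBl.
Qed.

Lemma Bf_subw w1 w2 x x' :
  Bf (fun I => w1 I - w2 I) x x' = Bf w1 x x' - Bf w2 x x'.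
Proof.
rewrite /Bf -sumrB; apply: eq_bigr => A _; rewrite -sumrB.
by apply: eq_bigr => B _; rewrite mulrBr.
Qed.

Lemma EopE l w : Eop l (Eop l w) = Eop l w.
Proof.
by apply: functional_extensionality => I; rewrite /Eop -setUA setUid.
Qed.

Lemma Q_push l w x : Qf w (push l x) = Qf (Eop l w) x.
Proof. by rewrite /Qf Bf_pushl Bf_pushr EopE. Qed.

Lemma Q_Dpush l w x :
  Qf w (fun A => x A - push l x A) = Qf (Dop l w) x.
Proof.
rewrite /Qf Bf_subl !Bf_subr !Bf_pushl !Bf_pushr EopE.
rewrite /Dop Bf_subw.
have -> : Bf (fun I => w (I :|: [set l])) x x = Bf (Eop l w) x x by [].
by rewrite subrr subr0.
Qed.


Definition opw (e : 'I_n * bool) (w : ST -> R) : ST -> R :=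
  if e.2 then Eop e.1 w else Dop e.1 w.
Definition opx (e : 'I_n * bool) (x : ST -> R) : ST -> R :=
  if e.2 then push e.1 x else (fun A => x A - push e.1 x A).
Fixpoint apply_w (p : seq ('I_n * bool)) (w : ST -> R) : ST -> R :=
  match p with [::] => w | e :: p' => apply_w p' (opw e w) end.
Fixpoint apply_x (p : seq ('I_n * bool)) (x : ST -> R) : ST -> R :=
  match p with [::] => x | e :: p' => opx e (apply_x p' x) end.

Lemma Q_opx e w x : Qf w (opx e x) = Qf (opw e w) x.
Proof. by case: e => l [] /=; rewrite /opx /opw /= ?Q_push ?Q_Dpush. Qed.

Lemma Q_apply p w x : Qf w (apply_x p x) = Qf (apply_w p w) x.
Proof. by elim: p w => [|e p IH] w //=; rewrite Q_opx IH. Qed.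

Fixpoint paths (s : seq 'I_n) : seq (seq ('I_n * bool)) :=
  match s with
  | [::] => [:: [::]]
  | l :: s' => [seq (l, true) :: q | q <- paths s'] ++
               [seq (l, false) :: q | q <- paths s']
  end.

Definition Phi (K : R) (v : 'I_n -> R) (w : ST -> R) : R :=
  K * w set0 - \sum_(i < n) v i * w [set i].

Lemma Phi_split K v l w : Phi K v w = Phi K v (Eop l w) + Phi K v (Dop l w).
Proof.
rewrite /Phi /Dop /Eop.
have -> : \sum_(i < n) v i * (w [set i] - w ([set i] :|: [set l])) =
  \sum_(i < n) v i * w [set i] - \sum_(i < n) v i * w ([set i] :|: [set l]).
  by rewrite -sumrB; apply: eq_bigr => i _; rewrite mulrBr.
by rewrite mulrBr set0U -arith4.
Qed.

Lemma Phi_paths K v s w :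
  Phi K v w = \sum_(p <- paths s) Phi K v (apply_w p w).
Proof.
elim: s w => [|l s IH] w /=; first by rewrite big_seq1.
by rewrite big_cat !big_map /= -!IH /opw /= -Phi_split.
Qed.

Lemma paths_mem s p : p \in paths s ->
  (forall l, l \in s -> exists b, (l, b) \in p) /\ (forall e, e \in p -> e.1 \in s).
Proof.
elim: s p => [|l s IH] p /=.
  by rewrite inE => /eqP ->; split => // e.
rewrite mem_cat => /orP [] /mapP [q qin ->]; have [H1 H2] := IH q qin; split.
- move=> m; rewrite inE => /orP [/eqP -> | ms]; first by exists true; rewrite inE eqxx.
  by have [b hb] := H1 m ms; exists b; rewrite inE hb orbT.
- by move=> e; rewrite inE => /orP [/eqP -> | /H2]; rewrite inE ?eqxx // => ->; rewrite orbT.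
- move=> m; rewrite inE => /orP [/eqP -> | ms]; first by exists false; rewrite inE eqxx.
  by have [b hb] := H1 m ms; exists b; rewrite inE hb orbT.
- by move=> e; rewrite inE => /orP [/eqP -> | /H2]; rewrite inE ?eqxx // => ->; rewrite orbT.
Qed.

Definition Pin (l : 'I_n) (w : ST -> R) := forall I, w (I :|: [set l]) = w I.
Definition Pout (l : 'I_n) (w : ST -> R) := forall I, w (I :|: [set l]) = 0.

Lemma Pin_op l e w : Pin l w -> Pin l (opw e w).
Proof.
case: e => m [] H I; rewrite /opw /Eop /Dop /=; first by rewrite setUAC H.
by rewrite H setUAC H.
Qed.

Lemma Pout_op l e w : Pout l w -> Pout l (opw e w).
Proof.
case: e => m [] H I; rewrite /opw /Eop /Dop /=; first by rewrite setUAC H.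
by rewrite H setUAC H subrr.
Qed.

Lemma Pin_apply l p w : Pin l w -> Pin l (apply_w p w).
Proof. by elim: p w => [|e p IH] w //= H; apply: IH; apply: Pin_op. Qed.

Lemma Pout_apply l p w : Pout l w -> Pout l (apply_w p w).
Proof. by elim: p w => [|e p IH] w //= H; apply: IH; apply: Pout_op. Qed.

Lemma leaf_in l p w : (l, true) \in p -> Pin l (apply_w p w).
Proof.
elim: p w => [|e p IH] w //=; rewrite inE => /orP [/eqP <- | H]; last exact: IH.
by apply: Pin_apply => I; rewrite /opw /Eop /= -setUA setUid.
Qed.

Lemma leaf_out l p w : (l, false) \in p -> Pout l (apply_w p w).
Proof.
elim: p w => [|e p IH] w //=; rewrite inE => /orP [/eqP <- | H]; last exact: IH.
by apply: Pout_apply => I; rewrite /opw /Dop /= -setUA setUid subrr.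
Qed.

Definition SP (Z : ST) (x : ST -> R) := forall A, x A != 0 -> A \subset Z.

Lemma SP_push (l : 'I_n) (Z : ST) (x : ST -> R) : l \in Z -> SP Z x -> SP Z (push l x).
Proof.
move=> lZ H A nz.
case: (pickP (fun B => (B :|: [set l] == A) && (x B != 0))) => [B /andP [/eqP <- nzB] | H0].
  by rewrite subUset H // sub1set lZ.
move: nz; rewrite /push big1 ?eqxx // => B BA.
by move: (H0 B); rewrite BA /= => /negbFE /eqP.
Qed.

Lemma SP_sub (Z : ST) (x1 x2 : ST -> R) : SP Z x1 -> SP Z x2 -> SP Z (fun A => x1 A - x2 A).
Proof.
move=> H1 H2 A nz; case: (x1 A =P 0) => [e1 | /eqP n1]; last exact: H1 A n1.
by move: nz; rewrite e1 sub0r oppr_eq0; apply: H2.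
Qed.

Lemma SP_apply p (Z : ST) (x : ST -> R) : (forall e, e \in p -> e.1 \in Z) -> SP Z x -> SP Z (apply_x p x).
Proof.
elim: p => [|e p IH] //= He H.
have H' : SP Z (apply_x p x) by apply: IH => // f fp; apply: He; rewrite inE fp orbT.
have eZ : e.1 \in Z by apply: He; rewrite inE eqxx.
rewrite /opx; case: e.2; first exact: SP_push.
by apply: SP_sub => //; apply: SP_push.
Qed.

Definition delta (A0 : ST) : ST -> R := fun A => (A == A0)%:R.

Lemma SP_delta (Z A0 : ST) : A0 \subset Z -> SP Z (delta A0).
Proof.
move=> H A; rewrite /delta.
have [e | ne] := eqVneq A A0; first by rewrite e.
by rewrite mulr0n eqxx.
Qed.

Lemma sum_delta (F : ST -> R) A0 : \sum_(A : ST) delta A0 A * F A = F A0.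
Proof.
rewrite (bigD1 A0) //= /delta eqxx mul1r big1 ?addr0 // => A /negbTE ->.
by rewrite mul0r.
Qed.

Lemma Q_delta w A0 : Qf w (delta A0) = w A0.
Proof.
rewrite /Qf /Bf.
under eq_bigr do under eq_bigr do rewrite -mulrA.
under eq_bigr do rewrite -big_distrr /=.
rewrite (sum_delta (fun A => \sum_(B : ST) delta A0 B * w (A :|: B))).
by rewrite (sum_delta (fun B => w (A0 :|: B))) setUid.
Qed.

Lemma Q_ext (w w' x : ST -> R) :
  (forall A B, x A != 0 -> x B != 0 -> w (A :|: B) = w' (A :|: B)) -> Qf w x = Qf w' x.
Proof.
move=> H; apply: eq_bigr => A _; apply: eq_bigr => B _.
case: (x A =P 0) => [-> | /eqP nA]; first by rewrite !mul0r.
case: (x B =P 0) => [-> | /eqP nB]; first by rewrite mulr0 !mul0r.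
by rewrite H.
Qed.

Lemma Q_trunc (P : pred ST) (w x : ST -> R) :
  (forall A B, ~~ (P A && P B) -> w (A :|: B) = 0) ->
  Qf w x = Qf w (fun A => if P A then x A else 0).
Proof.
move=> H; apply: eq_bigr => A _; apply: eq_bigr => B _.
case: (boolP (P A && P B)) => [/andP [-> ->] // | h].
by rewrite H // !mulr0.
Qed.

Lemma psd_Q (k : nat) (w x : ST -> R) : psd_on (Pt n k) (moment_mx w) ->
  (forall A, x A != 0 -> (#|A| <= k)%N) -> 0 <= Qf w x.
Proof.
move=> Hp Hs; have := Hp x.
suff -> : \sum_(I | Pt n k I) \sum_(J | Pt n k J) x I * moment_mx w I J * x J = Qf w x by [].
rewrite /Qf /Bf big_mkcond; apply: eq_bigr => A _.
case: (boolP (Pt n k A)) => HA.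
  rewrite big_mkcond; apply: eq_bigr => B _.
  case: (boolP (Pt n k B)) => HB; first by rewrite /moment_mx mulrAC.
  have [xB | nB] := eqVneq (x B) 0; first by rewrite xB mulr0 mul0r.
  by move: HB; rewrite /Pt Hs.
have [xA | nA] := eqVneq (x A) 0; last by move: HA; rewrite /Pt Hs.
by rewrite big1 // => B _; rewrite xA !mul0r.
Qed.


Lemma sum_delta2 (r : R) (A B : ST) (F : ST -> R) :
  \sum_(X : ST) (r * delta A X + delta B X) * F X = r * F A + F B.
Proof.
rewrite -(sum_delta F A) -(sum_delta F B) big_distrr -big_split /=.
by apply: eq_bigr => X _; rewrite mulrDl mulrA.
Qed.

Lemma Q_comb2 (w : ST -> R) (r : R) (A B : ST) :
  Qf w (fun X => r * delta A X + delta B X) =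
  r * (r * w (A :|: A) + w (A :|: B)) + (r * w (B :|: A) + w (B :|: B)).
Proof.
rewrite /Qf /Bf.
under eq_bigr do under eq_bigr do rewrite -mulrA.
under eq_bigr do rewrite -big_distrr /=.
rewrite (sum_delta2 r A B (fun X => \sum_(Y : ST) (r * delta A Y + delta B Y) * w (X :|: Y))).
by rewrite !sum_delta2.
Qed.

End QF.
Section Frac.
Variable R : realFieldType.
Variable n : nat.
Variables c v : 'I_n -> R.
Hypothesis hc : forall i, 0 <= c i.
Hypothesis hv : forall i, 0 <= v i.

Lemma exists_least (Sm : {set 'I_n}) : Sm != set0 ->
  exists2 m, m \in Sm & forall i, i \in Sm -> v m * c i <= v i * c m.
Proof.
move=> /set0Pn [i0 i0S].
case: (pickP (fun j => (j \in Sm) && (0 < c j))) => [j0 /andP [j0S cj0] | Hno].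
  case: (@arg_minP _ R _ j0 (fun j => (j \in Sm) && (0 < c j)) (fun j => v j / c j)).
    by rewrite j0S cj0.
  move=> m /andP [mS cm] Hmin; exists m => // i iS.
  have [ci0 | ] := eqVneq (c i) 0.
    by rewrite ci0 mulr0 mulr_ge0.
  move=> cin0; have ci : 0 < c i by rewrite lt_def cin0 hc.
  have := Hmin i; rewrite iS ci => /(_ isT).
  rewrite ler_pdivrMr // mulrAC ler_pdivlMr //.
exists i0 => // i iS.
have ci : c i = 0.
  by move: (Hno i); rewrite iS /= => /negbT; rewrite lt_def negb_and negbK hc orbF => /eqP.
have cm : c i0 = 0.
  by move: (Hno i0); rewrite i0S /= => /negbT; rewrite lt_def negb_and negbK hc orbF => /eqP.
by rewrite ci cm !mulr0.
Qed.

Definition csum (f : 'I_n -> R) (X : {set 'I_n}) := \sum_(i in X) f i.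

Lemma greedy (k : nat) (Sm : {set 'I_n}) (B : R) : (#|Sm| <= k)%N -> 0 <= B ->
  csum c Sm <= B \/
  exists (X : {set 'I_n}) (rho : R) (k0 : 'I_n), X \subset Sm /\ k0 \in Sm /\ k0 \notin X /\ 0 <= rho /\
     csum c X <= B /\ B < csum c X + c k0 /\ v k0 = rho * c k0 /\
     (forall i, i \in X -> rho * c i <= v i) /\
     (forall i, i \in Sm -> i \notin X -> v i <= rho * c i).
Proof.
elim: k Sm => [|k IH] Sm hk hB.
  move: hk; rewrite leqn0 cards_eq0 => /eqP ->; left; by rewrite /csum big_set0.
have [-> | Sm0] := eqVneq Sm set0; first by left; rewrite /csum big_set0.
have [m mS hm] := exists_least Sm0.
have hk' : (#|Sm :\ m| <= k)%N.
  by move: hk; rewrite (cardsD1 m Sm) mS add1n ltnS.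
have eS : csum c Sm = c m + csum c (Sm :\ m) by rewrite /csum (big_setD1 m).
case: (IH _ hk' hB) => [H | [X [rho [k0 [XS [k0S [k0X [rho0 [cX [ov [vk [Hin Hout]]]]]]]]]]]].
  have [HS | HS] := leP (csum c Sm) B; first by left.
  right.
  have cm : 0 < c m.
    have : B < c m + csum c (Sm :\ m) by rewrite -eS.
    by rewrite -ltrBlDr => h; apply: le_lt_trans h; rewrite subr_ge0.
  exists (Sm :\ m), (v m / c m), m; split; first exact: subD1set.
  split => //; split; first by rewrite setD11.
  split; first by rewrite divr_ge0 // hc.
  split => //; split; first by rewrite addrC -eS.
  split; first by rewrite divfK // gt_eqF.
  split.
    by move=> i /setD1P [_ iS]; rewrite mulrAC ler_pdivrMr // hm.
  move=> i iS; rewrite in_setD1 iS andbT negbK => /eqP ->.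
  by rewrite divfK // gt_eqF.
right; exists X, rho, k0.
split; first by apply: (subset_trans XS); apply: subD1set.
split; first by move: k0S => /setD1P [].
do 6 (split => //).
move=> i iS iX; have [im | inm] := eqVneq i m; last first.
  by apply: Hout => //; rewrite in_setD1 inm.
rewrite im.
have ck0 : 0 < c k0 by move: ov; rewrite -ltrBlDl => /(le_lt_trans _); apply; rewrite subr_ge0.
have k0S' : k0 \in Sm by move: k0S => /setD1P [].
have := hm k0 k0S'; rewrite vk mulrAC => h.
by rewrite -(ler_pM2r ck0).
Qed.

Lemma frac_bound (eps B a : R) (Sm : {set 'I_n}) (u : 'I_n -> R) :
  0 <= eps -> (forall i, i \in Sm -> v i <= eps) -> 0 <= B -> 0 <= a ->
  (forall i, i \in Sm -> 0 <= u i <= a) -> \sum_(i in Sm) c i * u i <= B * a ->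
  exists2 X : {set 'I_n}, X \subset Sm &
    csum c X <= B /\ \sum_(i in Sm) v i * u i <= a * (csum v X + eps).
Proof.
move=> he hve hB ha hu hcu.
case: (@greedy #|Sm| Sm B (leqnn _) hB) =>
  [H | [X [rho [k0 [XS [k0S [k0X [rho0 [cX [ov [vk [Hin Hout]]]]]]]]]]]].
  exists Sm => //; split => //.
  apply: (@le_trans _ _ (a * csum v Sm)); last first.
    by rewrite ler_wpM2l // lerDl.
  rewrite /csum big_distrr /=; apply: ler_sum => i iS.
  by rewrite mulrC ler_wpM2r ?hv //; case/andP: (hu i iS).
exists X => //; split => //.
have e1 : \sum_(i in Sm) v i * u i =
   \sum_(i in Sm) (v i - rho * c i) * u i + rho * \sum_(i in Sm) c i * u i.
  rewrite big_distrr -big_split /=; apply: eq_bigr => i _.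
  by rewrite mulrBl mulrA subrK.
have e2 : \sum_(i in Sm) (v i - rho * c i) * u i <=
          \sum_(i in Sm) (if i \in X then (v i - rho * c i) * a else 0).
  apply: ler_sum => i iS; case/andP: (hu i iS) => u0 ua.
  case: (boolP (i \in X)) => iX.
    by apply: ler_wpM2l => //; rewrite subr_ge0 Hin.
  by apply: mulr_le0_ge0 => //; rewrite subr_le0 Hout.
have e3 : \sum_(i in Sm) (if i \in X then (v i - rho * c i) * a else 0) =
          (csum v X - rho * csum c X) * a.
  rewrite -big_mkcondr /= -big_distrl /= /csum mulr_sumr -sumrB.
  congr (_ * _); apply: eq_bigl => i.
  by case: (boolP (i \in X)) => iX; rewrite ?andbT ?andbF // (subsetP XS).
rewrite e1; apply: (@le_trans _ _ ((csum v X - rho * csum c X) * a + rho * (B * a))).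
  by rewrite lerD // -?e3 // ler_wpM2l.
have e4 : (csum v X - rho * csum c X) * a + rho * (B * a) =
          a * (csum v X + rho * (B - csum c X)).
  rewrite mulrBr mulrDr mulrBr mulrBl [a * csum v X]mulrC.
  rewrite [a * (rho * B)]mulrCA [a * (rho * csum c X)]mulrCA !mulrA.
  rewrite -[rho * csum c X * a]mulrA [csum c X * a]mulrC mulrA.
  by rewrite [rho * a * csum c X]mulrAC [rho * a * B]mulrAC addrA addrAC.
rewrite e4 ler_wpM2l // lerD2l.
apply: (@le_trans _ _ (rho * c k0)).
  by rewrite ler_wpM2l // lerBlDl ltW.
by rewrite -vk hve.
Qed.

End Frac.

Lemma sub_card (T : finType) (A : {set T}) (k : nat) : (k <= #|A|)%N ->
  exists I : {set T}, I \subset A /\ #|I| = k.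
Proof.
elim: k => [|k IH] hk; first by exists set0; rewrite sub0set cards0.
have [I [IA cI]] := IH (ltnW hk).
have : ~~ (A \subset I).
  apply/negP => AI; have := subset_leq_card AI; rewrite cI leqNgt hk //.
case/subsetPn => x xA xI; exists (x |: I); split.
  by rewrite subUset sub1set xA IA.
by rewrite cardsU1 xI cI.
Qed.

Lemma card_setU_le (T : finType) (A B : {set T}) : (#|A :|: B| <= #|A| + #|B|)%N.
Proof. exact: (leq_card_setU A B).1. Qed.

Section Main.
Variable R : realFieldType.
Variable n : nat.
Variables c v : 'I_n -> R.
Variable C : R.
Hypothesis hc : forall i, 0 <= c i.
Hypothesis hv : forall i, 0 <= v i.
Hypothesis hcC : forall i, c i <= C.
Variable k : nat.
Variable y : {set 'I_n} -> R.
Hypothesis HL : Lasserre c C k.+2 y.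
Local Notation ST := {set 'I_n}.
Local Notation dlt := (@delta R n).

Definition OPT := knapOPT c v C.
Definition eps := OPT / (k.+1)%:R.
Definition L : ST := [set i | eps < v i].
Definition yh (U : ST) : R := if (k.+1 <= #|U :&: L|)%N then 0 else y U.
Local Notation gy := (knap_gy c C).

Lemma y0 : y set0 = 1. Proof. by case: HL. Qed.
Lemma ybnd (U : ST) : (#|U| <= 2 * k.+2)%N -> 0 <= y U <= 1.
Proof. by case: HL => _ H _ _; apply: H. Qed.
Lemma psd1 : psd_on (Pt n k.+2) (moment_mx y).
Proof. by case: HL. Qed.
Lemma psd2 : psd_on (Pt n k.+1) (moment_mx (gy y)).
Proof. by case: HL => _ _ _; rewrite subn1. Qed.

Lemma OPT_ge0 : 0 <= OPT.
Proof.
rewrite /OPT /knapOPT; elim/big_ind: _ => //.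
  by move=> a b ha hb; rewrite le_max ha.
by move=> X _; apply: sumr_ge0 => i _.
Qed.

Lemma OPT_ge (X : ST) : \sum_(i in X) c i <= C -> \sum_(i in X) v i <= OPT.
Proof.
move=> hX; rewrite /OPT /knapOPT (bigD1 X) //=.
by rewrite le_max lexx.
Qed.

Lemma eps_ge0 : 0 <= eps.
Proof. by rewrite /eps divr_ge0 ?OPT_ge0. Qed.

Lemma large_infeas (I : ST) : I \subset L -> #|I| = k.+1 -> C < \sum_(i in I) c i.
Proof.
move=> IL cI; rewrite ltNge; apply/negP => /OPT_ge.
apply/negP; rewrite -ltNge.
have -> : OPT = \sum_(i in I) eps.
  by rewrite sumr_const cI -mulr_natr /eps divfK // pnatr_eq0.
apply: ltr_sum.
  have : (0 < #|I|)%N by rewrite cI.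
  by rewrite card_gt0 => /set0Pn [x xI]; apply/hasP; exists x; rewrite ?mem_index_enum.
by move=> i iI; have := subsetP IL i iI; rewrite inE.
Qed.


Lemma yI0 (I : ST) : I \subset L -> #|I| = k.+1 -> y I = 0.
Proof.
move=> IL cI.
have hge : 0 <= gy y I.
  have := @psd_Q R n k.+1 (gy y) (dlt I) psd2.
  rewrite Q_delta; apply => A; rewrite /delta.
  have [-> _ | _] := eqVneq A I; first by rewrite cI.
  by rewrite mulr0n eqxx.
have yI : 0 <= y I.
  have hI2 : (#|I| <= 2 * k.+2)%N.
    by rewrite cI; apply: leq_trans (leqnSn _) _; rewrite leq_pmull.
  by case/andP: (ybnd hI2).
have hs : (\sum_(i in I) c i) * y I <= \sum_(j < n) c j * y (I :|: [set j]).
  rewrite big_distrl /= [X in _ <= X](bigID (fun j => j \in I)) /=.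
  have -> : \sum_(i < n | i \in I) c i * y (I :|: [set i]) = \sum_(i in I) c i * y I.
    by apply: eq_bigr => i iI; rewrite (setUidPl _) // sub1set.
  rewrite lerDl; apply: sumr_ge0 => j _; apply: mulr_ge0 => //.
  have hj : (#|I :|: [set j]| <= 2 * k.+2)%N.
    apply: leq_trans (card_setU_le _ _) _; rewrite cards1 cI addn1 leq_pmull //.
  by case/andP: (ybnd hj).
have h1 : \sum_(j < n) c j * y (I :|: [set j]) <= C * y I.
  by move: hge; rewrite /knap_gy subr_ge0.
apply/eqP; rewrite eq_le yI andbT leNgt; apply/negP => ypos.
have h2 : C * y I < (\sum_(i in I) c i) * y I by rewrite ltr_pM2r // large_infeas.
by have := le_lt_trans (le_trans hs h1) h2; rewrite ltxx.
Qed.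

Lemma yU0 (A B : ST) : (#|A| <= k.+2)%N -> (#|B| <= k.+2)%N -> y A = 0 -> y (A :|: B) = 0.
Proof.
move=> hA hB yA.
set z := y (A :|: B).
apply/eqP/negPn/negP => hz.
have hzz : z + z != 0.
  by rewrite -mulr2n -mulr_natr mulf_neq0 // pnatr_eq0.
set r := - (y B + 1) / (z + z).
have hq := @psd_Q R n k.+2 y (fun X => r * dlt A X + dlt B X) psd1.
have : 0 <= Qf y (fun X => r * dlt A X + dlt B X).
  apply: hq => X; rewrite /delta.
  have [-> _ | _] := eqVneq X A; first by [].
  have [-> _ | _] := eqVneq X B; first by [].
  by rewrite !mulr0n mulr0 addr0 eqxx.
rewrite Q_comb2 !setUid yA mulr0 add0r (setUC B A) -/z addrA -mulrDr.
rewrite /r divfK // opprD addrAC addNr add0r oppr_ge0.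
by rewrite ler10.
Qed.

Lemma yvan (U : ST) : (#|U| <= 2 * k.+2)%N -> (k.+1 <= #|U :&: L|)%N -> y U = 0.
Proof.
move=> hU hUL.
have [I [IUL cI]] := sub_card hUL.
have IL : I \subset L by apply: (subset_trans IUL); apply: subsetIr.
have IU : I \subset U by apply: (subset_trans IUL); apply: subsetIl.
have yI := yI0 IL cI.
have cI2 : (#|I| <= k.+2)%N by rewrite cI.
case: (leqP #|U| k.+2) => hU2.
  by have := yU0 cI2 hU2 yI; rewrite (setUidPr IU).
have : ~~ (U \subset I).
  by apply/negP => UI; have := subset_leq_card UI; rewrite cI leqNgt (ltn_trans _ hU2).
case/subsetPn => x xU xI.
set A := I :|: [set x].
have cA : #|A| = k.+2 by rewrite /A setUC cardsU1 xI cI.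
have yA : y A = 0 by apply: yU0 => //; rewrite cards1.
have AU : A \subset U by rewrite subUset IU sub1set.
have cB : (#|U :\: A| <= k.+2)%N by rewrite cardsDS // cA leq_subLR addnn -mul2n.
have := yU0 (eq_leq cA) cB yA.
suff -> : A :|: U :\: A = U by [].
by rewrite -[RHS](setID U A) (setIidPr AU).
Qed.

Lemma yh_eq (U : ST) : (#|U| <= 2 * k.+2)%N -> yh U = y U.
Proof. by rewrite /yh => hU; case: ifP => // h; rewrite yvan. Qed.

Lemma yh_van (U : ST) : (k.+1 <= #|U :&: L|)%N -> yh U = 0.
Proof. by rewrite /yh => ->. Qed.

Lemma gyh_van (U : ST) : (k.+1 <= #|U :&: L|)%N -> gy yh U = 0.
Proof.
move=> h; rewrite /knap_gy yh_van // mulr0 big1 ?subr0 // => j _.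
rewrite yh_van ?mulr0 //; apply: (leq_trans h); apply: subset_leq_card.
by apply: setSI; apply: subsetUl.
Qed.

Lemma gyh_eq (U : ST) : (#|U| < 2 * k.+2)%N -> gy yh U = gy y U.
Proof.
move=> h; rewrite /knap_gy yh_eq ?(ltnW h) //; congr (_ - _); apply: eq_bigr => j _.
rewrite yh_eq //; apply: (leq_trans (card_setU_le _ _)); rewrite cards1 addn1 //.
Qed.


Definition good (A : ST) : bool := (#|A :&: L| <= k)%N.

Lemma good_van (w : ST -> R) :
  (forall U : ST, (k.+1 <= #|U :&: L|)%N -> w U = 0) ->
  forall A B : ST, ~~ (good A && good B) -> w (A :|: B) = 0.
Proof.
move=> H A B; rewrite negb_and /good -!ltnNge => /orP [] h; apply: H;
  apply: (leq_trans h); apply: subset_leq_card; apply: setSI.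
  exact: subsetUl.
exact: subsetUr.
Qed.

Lemma card_good (Z A : ST) : A \subset Z :|: L -> good A -> (#|A| <= #|Z| + k)%N.
Proof.
move=> AZ gA; rewrite -(cardsID L A) addnC leq_add //.
apply: subset_leq_card; apply/subsetP => x /setDP [xA xL].
by have := subsetP AZ x xA; rewrite in_setU (negbTE xL) orbF.
Qed.

Lemma psd_leaf (p : seq ('I_n * bool)) (x0 : ST -> R) (Z : ST) : (forall e, e \in p -> e.1 \in L) ->
  (#|Z| <= 1)%N -> SP Z x0 -> 0 <= Qf yh (apply_x p x0).
Proof.
move=> pL hZ sp0.
have sp : SP (Z :|: L) (apply_x p x0).
  apply: SP_apply; first by move=> e /pL; rewrite in_setU => ->; rewrite orbT.
  by move=> A /sp0 AZ; apply: (subset_trans AZ); apply: subsetUl.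
rewrite (@Q_trunc R n good yh (apply_x p x0) (good_van yh_van)).
set Xt := fun A => if good A then apply_x p x0 A else 0.
have supp : forall A, Xt A != 0 -> (#|A| <= k.+1)%N.
  move=> A; rewrite /Xt; case: ifP => gA; last by rewrite eqxx.
  move=> /sp AZ; apply: (leq_trans (card_good AZ gA)).
  by rewrite -add1n leq_add2r.
rewrite (@Q_ext R n yh y Xt).
  apply: psd_Q psd1 _ => A /supp h; exact: (leq_trans h).
move=> A B /supp hA /supp hB; apply: yh_eq.
apply: (leq_trans (card_setU_le _ _)); apply: (leq_trans (leq_add hA hB)).
by rewrite addnn -mul2n leq_mul2l /= ltnW.
Qed.

Lemma psd_leaf_g (p : seq ('I_n * bool)) : (forall e, e \in p -> e.1 \in L) ->
  0 <= Qf (gy yh) (apply_x p (dlt set0)).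
Proof.
move=> pL.
have sp : SP L (apply_x p (dlt set0)).
  by apply: SP_apply => //; apply: SP_delta; apply: sub0set.
rewrite (@Q_trunc R n good (gy yh) (apply_x p (dlt set0)) (good_van gyh_van)).
set Xt := fun A => if good A then apply_x p (dlt set0) A else 0.
have supp : forall A, Xt A != 0 -> (#|A| <= k)%N.
  move=> A; rewrite /Xt; case: ifP => gA; last by rewrite eqxx.
  move=> /sp AL; have := @card_good set0 A; rewrite set0U cards0 add0n; exact.
rewrite (@Q_ext R n (gy yh) (gy y) Xt).
  apply: psd_Q psd2 _ => A /supp h; exact: (leq_trans h).
move=> A B /supp hA /supp hB; apply: gyh_eq.
apply: (leq_ltn_trans (card_setU_le _ _)); apply: (leq_ltn_trans (leq_add hA hB)).
by rewrite addnn -mul2n ltn_mul2l /= ltnW.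
Qed.

Lemma gy_op e (w : ST -> R) : opw e (gy w) = gy (opw e w).
Proof.
apply: functional_extensionality => I.
case: e => l [] ; rewrite /opw /Eop /Dop /knap_gy /=.
  by congr (_ - _); apply: eq_bigr => j _; rewrite setUAC.
rewrite mulrBr.
have -> : \sum_(j < n) c j * (w (I :|: [set j]) - w (I :|: [set j] :|: [set l])) =
  \sum_(j < n) c j * w (I :|: [set j]) - \sum_(j < n) c j * w (I :|: [set l] :|: [set j]).
  by rewrite -sumrB; apply: eq_bigr => j _; rewrite mulrBr setUAC.
by rewrite arith5.
Qed.

Lemma gy_apply (p : seq ('I_n * bool)) (w : ST -> R) : apply_w p (gy w) = gy (apply_w p w).
Proof. by elim: p w => [|e p IH] w //=; rewrite gy_op IH. Qed.

Lemma sum_disj (f : 'I_n -> R) (S X : ST) : S \subset L -> X \subset ~: L ->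
  \sum_(i in S :|: X) f i = csum f S + csum f X.
Proof.
move=> SL XL; rewrite /csum -bigU.
  by apply: eq_bigl => i; rewrite !inE.
rewrite disjoints_subset; apply/subsetP => i iS.
rewrite in_setC; apply/negP => iX.
by have := subsetP XL i iX; rewrite in_setC (subsetP SL i iS).
Qed.

Lemma leaf_nonneg (p : seq ('I_n * bool)) : p \in paths (enum L) -> 0 <= Phi (OPT + eps) v (apply_w p yh).
Proof.
move=> pin; have [H1 H2] := paths_mem pin.
have pL : forall e, e \in p -> e.1 \in L by move=> e /H2; rewrite mem_enum.
set u := apply_w p yh.
have u0 : 0 <= u set0.
  rewrite -(Q_delta u set0) /u -Q_apply; apply: (@psd_leaf _ _ set0) => //.
    by rewrite cards0.
  by apply: SP_delta; apply: sub0set.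
have ui : forall i, 0 <= u [set i].
  move=> i; have -> : u [set i] = Qf (Eop i u) (dlt set0) by rewrite Q_delta /Eop set0U.
  rewrite -Q_push /u -Q_apply; apply: (@psd_leaf _ _ [set i]) => //.
    by rewrite cards1.
  by apply: SP_push; [rewrite set11 | apply: SP_delta; apply: sub0set].
have uid : forall i, u [set i] <= u set0.
  move=> i; have e : u set0 - u [set i] = Qf (Dop i u) (dlt set0).
    by rewrite Q_delta /Dop set0U.
  rewrite -subr_ge0 e -Q_Dpush /u -Q_apply; apply: (@psd_leaf _ _ [set i]) => //.
    by rewrite cards1.
  apply: SP_sub; first by apply: SP_delta; apply: sub0set.
  by apply: SP_push; [rewrite set11 | apply: SP_delta; apply: sub0set].
have ug : \sum_(j < n) c j * u [set j] <= C * u set0.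
  have : 0 <= gy u set0.
    rewrite /u -gy_apply -Q_delta -Q_apply; exact: psd_leaf_g.
  rewrite /knap_gy subr_ge0.
  have -> : \sum_(j < n) c j * u (set0 :|: [set j]) = \sum_(j < n) c j * u [set j].
    by apply: eq_bigr => j _; rewrite set0U.
  by [].
set S : ST := [set l in L | (l, true) \in p].
have SL : S \subset L by apply/subsetP => l; rewrite inE => /andP [].
have uS : forall l, l \in S -> u [set l] = u set0.
  move=> l; rewrite inE => /andP [_ h].
  by have := leaf_in yh h set0; rewrite set0U.
have uLS : forall l, l \in L -> l \notin S -> u [set l] = 0.
  move=> l lL lS; have lE : l \in enum L by rewrite mem_enum.
  have [b hb] := H1 l lE.
  case: b hb => hb; first by move: lS; rewrite inE lL hb.
  by have := leaf_out yh hb set0; rewrite set0U.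
have split : forall f : 'I_n -> R, \sum_(i < n) f i * u [set i] =
    csum f S * u set0 + \sum_(i in ~: L) f i * u [set i].
  move=> f; rewrite (bigID (fun i => i \in L)) /=; congr (_ + _); last first.
    by apply: eq_bigl => i; rewrite in_setC.
  rewrite (bigID (fun i => i \in S)) /= [X in _ + X]big1 ?addr0; last first.
    by move=> i /andP [iL iS]; rewrite uLS // mulr0.
  rewrite /csum big_distrl /=; apply: eq_big => i.
    by case: (boolP (i \in S)) => iS; rewrite ?andbT ?andbF // (subsetP SL).
  by move=> /andP [_ iS]; rewrite uS.
have [u00 | upos] : u set0 = 0 \/ 0 < u set0.
  by move: u0; rewrite le_eqVlt => /orP [/eqP <-|]; [left | right].
  rewrite /Phi split u00 !mulr0 add0r big1; first by rewrite addr0 oppr0.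
  move=> i _.
  have : u [set i] = 0 by apply/eqP; rewrite eq_le ui -u00 uid.
  by move=> ->; rewrite mulr0.
set B := C - csum c S.
have hcu : \sum_(i in ~: L) c i * u [set i] <= B * u set0.
  by move: ug; rewrite split /B mulrBl lerBrDl.
have hB : 0 <= B.
  rewrite -(pmulr_lge0 _ upos); apply: le_trans hcu.
  by apply: sumr_ge0 => i _; apply: mulr_ge0.
have hsmall : forall i, i \in ~: L -> v i <= eps.
  by move=> i; rewrite in_setC inE -leNgt.
have hu : forall i, i \in ~: L -> 0 <= u [set i] <= u set0.
  by move=> i _; rewrite ui uid.
have [X XL [cX hvX]] := frac_bound hc hv eps_ge0 hsmall hB (ltW upos) hu hcu.
have feas : \sum_(i in S :|: X) c i <= C.
  by rewrite sum_disj // -lerBrDl.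
have := OPT_ge feas; rewrite sum_disj // => hopt.
rewrite /Phi split subr_ge0.
apply: le_trans (lerD (lexx _) hvX) _.
by rewrite [u set0 * _]mulrC -mulrDl ler_wpM2r // addrA lerD2r.
Qed.

Lemma main_ineq : \sum_(i < n) v i * y [set i] <= (1 + 1 / (k.+1)%:R) * OPT.
Proof.
have e1 : \sum_(i < n) v i * y [set i] = \sum_(i < n) v i * yh [set i].
  by apply: eq_bigr => i _; rewrite yh_eq // cards1.
have e2 : (1 + 1 / (k.+1)%:R) * OPT = OPT + eps.
  by rewrite mulrDl mul1r div1r mulrC.
have hPhi : 0 <= Phi (OPT + eps) v yh.
  rewrite (Phi_paths _ _ (enum L)) big_seq; apply: sumr_ge0 => p pin.
  exact: leaf_nonneg.
by move: hPhi; rewrite /Phi subr_ge0 yh_eq ?cards0 // y0 mulr1 e1 e2.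
Qed.

End Main.

Unset Implicit Arguments.
Set Strict Implicit.

Theorem mainTheorem10 (R : realFieldType) (n : nat) (c v : 'I_n -> R) (C : R)
  (hc : forall i, 0 <= c i) (hv : forall i, 0 <= v i) (hcC : forall i, c i <= C)
  (t : nat) (ht : (2 <= t)%N) (y : {set 'I_n} -> R) :
  Lasserre c C t y ->
  \sum_(i < n) v i * y [set i] <= (1 + 1 / (t - 1)%:R) * knapOPT c v C.
Proof.
case: t ht => [|[|k]] // _ HL.
rewrite subn1 /=.
exact: (main_ineq hc hv HL).
Qed.
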